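(* Fix an integer $k\ge1$, let $\Delta_k:=\log(1/2)/\log(1-2^{-k})$ and fix $\Delta>\Delta_k$. For $n\ge k$ let $m=\lceil\Delta N_k\rceil$ and let the data $(\ell_j,\varepsilon_j)_{j\in[m]}$ be i.i.d., where $\ell_j=(\ell_{j,1},\dots,\ell_{j,k})$ is a uniformly random $k$-tuple of linearly independent linear forms on $\mathbb{F}_2^n$ and $\varepsilon_j\in\mathbb{F}_2^k$ is uniform and independent of $\ell_j$ (so that the flats $V_j=\{x:\ell_{j,i}(x)=\varepsilon_{j,i}\ \forall i\}$ satisfy $V\sim\mathbf{P}_{\text{unif}}$). Then the probability that the linear system $(\mathcal{L}_V)$ has a solution in $\mathbb{F}_2^{N_k}$ tends to $0$ as $n\to\infty$.
   Context: Let $N_k=\sum_{i=0}^k\binom{n}{i}$ and index the coordinates of $\mathbb{F}_2^{N_k}$ by subsets $S\subseteq[n]$ with $|S|\le k$. For linear forms $\ell_1,\dots,\ell_k$ on $\mathbb{F}_2^n$ and $\alpha\in\mathbb{F}_2^k$, expand $P_{\ell,\alpha}(x)=\prod_{i=1}^k(\ell_i(x)+\alpha_i)$ in $\mathbb{F}_2[x_1,\dots,x_n]$ and reduce using $x_s^2=x_s$, obtaining $\sum_{|S|\le k}c_S(\ell,\alpha)\prod_{s\in S}x_s$; define the linear form $\mathcal{L}_{\ell,\alpha}(Y)=\sum_{|S|\le k}c_S(\ell,\alpha)Y_S$ on $\mathbb{F}_2^{N_k}$. Given data $(\ell_j,\varepsilon_j)_{j\in[m]}$ describing flats $V_j$,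 with $\alpha_j:=(1-\varepsilon_{j,i})_{i\in[k]}$, the system $(\mathcal{L}_V)$ is the system of $m+1$ linear equations in $Y\in\mathbb{F}_2^{N_k}$: $\mathcal{L}_{\ell_j,\alpha_j}(Y)=0$ for all $j\in[m]$, and $Y_\emptyset=1$. $\mathbf{P}_{\text{unif}}$ is the law of $m$ i.i.d. uniform affine subspaces of $\mathbb{F}_2^n$ of dimension $n-k$. *)

(* Defs.v *)
From HB Require Import structures.
From mathcomp Require Import all_boot all_order all_algebra all_fingroup all_field.
From Stdlib Require Import Reals.
Set Implicit Arguments. Unset Strict Implicit. Unset Printing Implicit Defensive.
Import GRing.Theory.
Local Open Scope ring_scope.

Definition Nk (n k : nat) : nat := \big[addn/0%nat]_(i < k.+1) 'C(n, i).

(* A k-tuple of linear forms on F_2^n is a k x n matrix over F_2 (row i = ell_i);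
   ell_i(x) = sum_s ell_{i,s} x_s. *)

(* Coefficient c_S(ell, alpha) of the monomial prod_{s in S} x_s in the
   expansion of prod_{i<k} (sum_s ell_{i,s} x_s + alpha_i) reduced by x_s^2 = x_s:
   expanding the product amounts to choosing for each factor i either the
   constant alpha_i (None) or a term ell_{i,s} x_s (Some s); the resulting
   monomial after reduction is prod over the set of chosen variables. *)
Definition choice_set (n k : nat) (sg : {ffun 'I_k -> option 'I_n}) : {set 'I_n} :=
  [set s | [exists i, sg i == Some s]].

Definition choice_coef (n k : nat) (l : 'M['F_2]_(k, n)) (alpha : 'rV['F_2]_k)
    (sg : {ffun 'I_k -> option 'I_n}) : 'F_2 :=
  \prod_(i < k) match sg i with None => alpha ord0 i | Some s => l i s end.

Definition coefS (n k : nat) (l : 'M['F_2]_(k, n)) (alpha : 'rV['F_2]_k)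
    (S : {set 'I_n}) : 'F_2 :=
  \sum_(sg : {ffun 'I_k -> option 'I_n} | choice_set sg == S) choice_coef l alpha sg.

(* The linear form L_{ell,alpha}(Y) = sum_{|S| <= k} c_S(ell,alpha) Y_S,
   coordinates of F_2^{N_k} indexed by subsets S of [n] with |S| <= k. *)
Definition Lform (n k : nat) (l : 'M['F_2]_(k, n)) (alpha : 'rV['F_2]_k)
    (Y : {ffun {set 'I_n} -> 'F_2}) : 'F_2 :=
  \sum_(S : {set 'I_n} | leq #|S| k) coefS l alpha S * Y S.

Definition alpha_of (k : nat) (eps : 'rV['F_2]_k) : 'rV['F_2]_k :=
  \row_i (1 - eps ord0 i).

(* The system (L_V) is solvable.  (Coordinates Y_S with |S| > k do not occur
   in any equation, so quantifying over all functions on subsets is the same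
   as quantifying over F_2^{N_k}.) *)
Definition solvable (n k m : nat)
    (d : {ffun 'I_m -> 'M['F_2]_(k, n) * 'rV['F_2]_k}) : bool :=
  [exists Y : {ffun {set 'I_n} -> 'F_2},
     (Y set0 == 1) &&
     [forall j : 'I_m, Lform (d j).1 (alpha_of (d j).2) Y == 0]].

(* Sample space: m i.i.d. pairs (ell_j, eps_j), ell_j uniform among k-tuples of
   linearly independent forms (row_free k x n matrices), eps_j uniform. *)
Definition admissible (n k m : nat)
    (d : {ffun 'I_m -> 'M['F_2]_(k, n) * 'rV['F_2]_k}) : bool :=
  [forall j : 'I_m, row_free (d j).1].

Definition n_total (n k m : nat) : nat :=
  #|[set d : {ffun 'I_m -> 'M['F_2]_(k, n) * 'rV['F_2]_k} | admissible d]|.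

Definition n_solvable (n k m : nat) : nat :=
  #|[set d : {ffun 'I_m -> 'M['F_2]_(k, n) * 'rV['F_2]_k} | admissible d && solvable d]|.

Definition prob_solvable (n k m : nat) : Rdefinitions.R :=
  Rdiv (INR (n_solvable n k m)) (INR (n_total n k m)).

Definition Delta_k (k : nat) : Rdefinitions.R :=
  Rdiv (ln (Rdiv 1 2)) (ln (Rminus 1 (Rinv (pow 2 k)))).

Definition ceilR (x : Rdefinitions.R) : Z := Z.opp (Int_part (Ropp x)).

Definition m_of (Delta : Rdefinitions.R) (n k : nat) : nat :=
  Z.to_nat (ceilR (Rmult Delta (INR (Nk n k)))).

(* Main.v *)
Require Import Defs.
From mathcomp Require Import all_boot.
From Stdlib Require Import Reals.
From Stdlib Require Lra ZArith.
Import Lra.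

Module AlgPart.
From HB Require Import structures.
From mathcomp Require Import all_boot all_order all_algebra all_fingroup all_field.
Set Implicit Arguments. Unset Strict Implicit. Unset Printing Implicit Defensive.
Import GRing.Theory.
Section S1.
Local Open Scope ring_scope.

Lemma Fp2_cases (c : 'F_2) : c = 0 \/ c = 1.
Proof. case: c => [[|[|]]] //= H. left; exact/val_inj. right; exact/val_inj. Qed.
Lemma sumF2 (V : nmodType) (f : 'F_2 -> V) : \sum_(a : 'F_2) f a = f 0 + f 1.
Proof.
rewrite (bigD1 0) //= (bigD1 1) //= big_pred0 ?addr0 // => a.
by case: (Fp2_cases a) => ->; rewrite ?eqxx ?andbF.
Qed.
Lemma F2_dbl (c : 'F_2) : c + c = 0.
Proof. by case: (Fp2_cases c) => ->; [rewrite addr0 | apply/val_inj]. Qed.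

Lemma sum_cc (n k : nat) (l : 'M['F_2]_(k, n)) (sg : {ffun 'I_k -> option 'I_n}) :
  \sum_(alpha : 'rV['F_2]_k) choice_coef l alpha sg = (sg == [ffun => None])%:R.
Proof.
rewrite (reindex (fun f : {ffun 'I_k -> 'F_2} => \row_i f i)) /=; last first.
  exists (fun a : 'rV_k => [ffun i => a ord0 i]) => [f _|a _].
    by apply/ffunP=> i; rewrite ffunE mxE.
  by apply/rowP => i; rewrite mxE ffunE.
pose G i (a : 'F_2) := match sg i with None => a | Some s => l i s end.
have eq f : choice_coef l (\row_i f i) sg = \prod_i G i (f i).
  by apply: eq_bigr => i _; rewrite /G; case: (sg i) => //; rewrite mxE.
under eq_bigr do rewrite eq.
rewrite -(bigA_distr_bigA (fun i a => G i a)).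
under eq_bigr do rewrite sumF2 /G.
case: eqP => [->|/ffunP hne].
  by rewrite big1 // => i _; rewrite ffunE add0r.
have [i hi] : exists i, sg i != None.
  case: (pickP (fun i => sg i != None)) => [i hi|H]; first by exists i.
  exfalso; apply: hne => i; move: (H i); rewrite ffunE => /negbFE/eqP.
  done.
rewrite (bigD1 i) //=; move: hi; case: (sg i) => // s _.
by rewrite F2_dbl mul0r.
Qed.

Lemma choice_set_none (n k : nat) : choice_set ([ffun => None] : {ffun 'I_k -> option 'I_n}) = set0.
Proof.
apply/setP => s; rewrite inE in_set0; apply/negbTE/existsP => -[i].
by rewrite ffunE.
Qed.

Lemma sum_coefS (n k : nat) (l : 'M['F_2]_(k, n)) (S : {set 'I_n}) :
  \sum_(alpha : 'rV['F_2]_k) coefS l alpha S = (S == set0)%:R.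
Proof.
rewrite /coefS exchange_big /=.
under eq_bigr do rewrite sum_cc.
case: eqP => [->|hS].
  rewrite (bigD1 [ffun => None]) /= ?choice_set_none ?eqxx //.
  by rewrite big1 ?addr0 // => sg /andP[_ /negbTE ->].
apply: big1 => sg /eqP hs; case: eqP => // e; exfalso; apply: hS.
by rewrite -hs e choice_set_none.
Qed.

Lemma sum_Lform (n k : nat) (l : 'M['F_2]_(k, n)) (Y : {ffun {set 'I_n} -> 'F_2}) :
  \sum_(alpha : 'rV['F_2]_k) Lform l alpha Y = Y set0.
Proof.
rewrite /Lform exchange_big /=.
under eq_bigr do rewrite -mulr_suml sum_coefS.
rewrite (bigD1 set0) ?cards0 //= eqxx mul1r big1 ?addr0 // => S /andP[_ /negbTE ->].
by rewrite mul0r.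
Qed.

Lemma alpha_ofK (k : nat) (e : 'rV['F_2]_k) : alpha_of (alpha_of e) = e.
Proof. by apply/rowP => i; rewrite !mxE opprB addrC subrK. Qed.

Lemma exists_nz (n k : nat) (l : 'M['F_2]_(k, n)) (Y : {ffun {set 'I_n} -> 'F_2}) :
  Y set0 = 1 -> exists e, Lform l (alpha_of e) Y != 0.
Proof.
move=> hY; case: (pickP (fun e => Lform l (alpha_of e) Y != 0)) => [e he|H].
  by exists e.
exfalso; have := sum_Lform l Y; rewrite hY big1 => [|a _].
  by move/eqP; rewrite eq_sym oner_eq0.
by move: (H (alpha_of a)); rewrite alpha_ofK => /negbFE/eqP.
Qed.
End S1.

Lemma card_setE (T : finType) (P : pred T) : #|[set x | P x]| = \sum_x (P x : nat).
Proof. rewrite -sum1dep_card big_mkcond; apply: eq_bigr => x _; by case: (P x). Qed.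

Lemma card_rV (k : nat) : #|{: 'rV['F_2]_k}| = 2 ^ k.
Proof. by rewrite card_mx card_Fp // mul1n. Qed.

Section C.
Variables n k : nat.
Notation T := ('M['F_2]_(k, n) * 'rV['F_2]_k)%type.
Definition BB : {set T} := [set x : T | row_free x.1].
Definition AY (Y : {ffun {set 'I_n} -> 'F_2}) : {set T} :=
  [set x : T | row_free x.1 && (Lform x.1 (alpha_of x.2) Y == 0%R)].

Lemma card_BB : #|BB| = (\sum_(l : 'M['F_2]_(k, n)) (row_free l : nat)) * 2 ^ k.
Proof.
rewrite card_setE -(pair_big xpredT xpredT (fun l (e : 'rV['F_2]_k) => (row_free l : nat))) /=.
rewrite big_distrl /=; apply: eq_bigr => l _.
by rewrite sum_nat_const card_rV mulnC.
Qed.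

Lemma cardA (Y : {ffun {set 'I_n} -> 'F_2}) : Y set0 = 1%R ->
  2 ^ k * #|AY Y| <= (2 ^ k - 1) * #|BB|.
Proof.
move=> hY; rewrite card_BB card_setE.
rewrite -(pair_big xpredT xpredT (fun l (e : 'rV['F_2]_k) =>
  (row_free l && (Lform l (alpha_of e) Y == 0%R) : nat))) /=.
idtac.
rewrite big_distrr big_distrl big_distrr /=; apply: leq_sum => l _.
rewrite [row_free l * _]mulnC mulnCA leq_pmul2l ?expn_gt0 //.
case: (row_free l) => /=; last by rewrite big1.
rewrite muln1; have [e0 he0] := exists_nz l hY.
rewrite (bigD1 e0) //= (negbTE he0) add0n.
apply: (@leq_trans (\sum_(e | e != e0) 1)).
  by apply: leq_sum => e _; exact: leq_b1.
rewrite sum1dep_card.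
have -> : [set e | e != e0] = [set e in predC1 e0] by apply/setP => e; rewrite !inE.
by rewrite cardsE cardC1 card_rV subn1.
Qed.

Lemma card_fam (m : nat) (A : {set T}) :
  #|[set d : {ffun 'I_m -> T} | [forall j, d j \in A]]| = #|A| ^ m.
Proof.
have -> : [set d : {ffun 'I_m -> T} | [forall j, d j \in A]] = [set d in ffun_on A].
  by apply/setP => d; rewrite !inE; apply/forallP/ffun_onP.
by rewrite cardsE card_ffun_on card_ord.
Qed.

Lemma n_total_E (m : nat) : n_total n k m = #|BB| ^ m.
Proof.
rewrite /n_total -card_fam; apply: eq_card => d; rewrite !inE /admissible.
by apply/forallP/forallP => H j; move: (H j); rewrite inE.
Qed.

Definition Small : {set {ffun {set 'I_n} -> 'F_2}} :=
  [set Y : {ffun {set 'I_n} -> 'F_2} | [forall S : {set 'I_n}, (k < #|S|) ==> (Y S == 0%R)]].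

Lemma sum_eq_le (x : nat) : \sum_(i < k.+1) (x == i : nat) = (x <= k : nat).
Proof.
case: (ltnP x k.+1) => hx.
  rewrite (bigD1 (Ordinal hx)) //= eqxx big1.
    by move: hx; rewrite ltnS => ->.
  move=> i /eqP hi.
  case: eqP => // e; exfalso; apply: hi; exact/val_inj.
rewrite big1; first by move: hx; rewrite ltnNge => /negbTE ->.
move=> i _; case: eqP => // e; move: (ltn_ord i); by rewrite -e ltnNge hx.
Qed.

Lemma card_Small : #|Small| = 2 ^ Nk n k.
Proof.
pose D := [set S : {set 'I_n} | #|S| <= k].
have -> : Small = [set Y in pffun_on 0%R D predT].
  apply/setP => Y; rewrite !inE; apply/forallP/pffun_onP => [H|[H _] S].
    split=> //; apply/subsetP => S; rewrite !inE => hS; move: (H S); rewrite ltnNge.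
    by case: (#|S| <= k) => //= /eqP hS0; rewrite hS0 eqxx in hS.
  apply/implyP => hk; apply/negPn/negP => hS.
  by move: (subsetP H S); rewrite !inE hS leqNgt hk => /(_ isT).
rewrite cardsE card_pffun_on card_Fp //; congr (2 ^ _).
rewrite card_setE /Nk.
under eq_bigr do rewrite -sum_eq_le.
rewrite exchange_big /=; apply: eq_bigr => i _.
by rewrite -card_setE card_draws card_ord.
Qed.

Lemma main_count (m : nat) :
  (2 ^ k) ^ m * n_solvable n k m <= 2 ^ Nk n k * (2 ^ k - 1) ^ m * n_total n k m.
Proof.
pose P Y := (Y \in Small) && (Y set0 == 1%R).
pose F Y := [set d : {ffun 'I_m -> T} | [forall j, d j \in AY Y]].
have h1 : n_solvable n k m <= \sum_(Y | P Y) #|F Y|.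
  rewrite /n_solvable card_setE.
  under [X in _ <= X]eq_bigr do rewrite card_setE.
  rewrite exchange_big /=; apply: leq_sum => d _.
  case/boolP: (admissible d && solvable d) => //= /andP[had /existsP[Y /andP[/eqP h0 /forallP hj]]].
  pose Y' := [ffun S : {set 'I_n} => if #|S| <= k then Y S else 0%R].
  have eqL (l : 'M['F_2]_(k, n)) (a : 'rV['F_2]_k) : Lform l a Y' = Lform l a Y.
    by apply: eq_bigr => S hS; rewrite ffunE hS.
  have PY' : P Y'.
    rewrite /P inE ffunE cards0 h0 eqxx andbT; apply/forallP => S.
    by rewrite ffunE ltnNge; case: (#|S| <= k); rewrite /= ?eqxx.
  rewrite (bigD1 Y') //= ; apply: leq_trans (leq_addr _ _).
  suff -> : [forall j, d j \in AY Y'] by [].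
  apply/forallP => j; rewrite inE eqL hj andbT.
  by move/forallP: had => /(_ j).
have h2 Y : P Y -> (2 ^ k) ^ m * #|F Y| <= (2 ^ k - 1) ^ m * n_total n k m.
  case/andP => _ /eqP hY; rewrite card_fam n_total_E -!expnMn.
  case: (posnP m) => [->|mp]; first by rewrite !expn0.
  by rewrite leq_exp2r // cardA.
apply: (leq_trans (leq_mul (leqnn _) h1)).
rewrite big_distrr /=.
apply: (@leq_trans (\sum_(Y | P Y) ((2 ^ k - 1) ^ m * n_total n k m))).
  by apply: leq_sum => Y hY; apply: h2.
apply: (@leq_trans (\sum_(Y in Small) ((2 ^ k - 1) ^ m * n_total n k m))).
  rewrite (big_mkcond P) [X in _ <= X]big_mkcond; apply: leq_sum => Y _.
  by rewrite /P; case: (Y \in Small) => //=; case: (_ == _).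
by rewrite sum_nat_const card_Small mulnA.
Qed.
End C.
End AlgPart.

Section RealPart.
Local Open Scope R_scope.

Lemma INR_expn (a b : nat) : INR (expn a b) = (INR a ^ b).
Proof.
elim: b => [|b IH]; first by rewrite expn0.
by rewrite expnS mulnE mult_INR IH.
Qed.

Lemma INR_muln (a b : nat) : INR (muln a b) = (INR a * INR b).
Proof. by rewrite mulnE mult_INR. Qed.

Lemma exp_le (x y : R) : (x <= y) -> (exp x <= exp y).
Proof.
move=> h; case: (Rle_lt_or_eq_dec _ _ h) => [h'|->]; last exact: Rle_refl.
by apply: Rlt_le; apply: exp_increasing.
Qed.

Lemma m_of_ge (Delta : R) (n k : nat) : (Delta * INR (Nk n k) <= INR (m_of Delta n k)).
Proof.
rewrite /m_of /ceilR.
set x := (Delta * INR (Nk n k)).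
have [h1 _] := base_Int_part (- x).
have hz : (x <= IZR (- Int_part (- x))) by rewrite opp_IZR; lra.
move: hz; set z := (- Int_part (- x))%Z => hz.
case: (ZArith_dec.Z_lt_le_dec z 0) => hz0.
  have : (IZR z < 0) by apply: IZR_lt.
  have := pos_INR (Z.to_nat z); lra.
by rewrite INR_IZR_INZ Znat.Z2Nat.id.
Qed.

Lemma Nk_ge (n k : nat) : leq 1 k -> leq n (Nk n k).
Proof.
case: k => // k _; rewrite /Nk big_ord_recl big_ord_recl /= bin1.
by rewrite addnCA leq_addr.
Qed.

Lemma prob_le (n k m : nat) :
  (prob_solvable n k m <= 2 ^ Nk n k * (1 - / 2 ^ k) ^ m).
Proof.
have H := AlgPart.main_count n k m.
have X1 : leq 1 (expn 2 k) by rewrite expn_gt0.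
move/leP in H; apply le_INR in H; rewrite !INR_muln !INR_expn in H.
have hsub : INR (expn 2 k - 1) = INR (expn 2 k) - 1.
  by rewrite subnE minus_INR //; apply/leP.
have e2 : INR 2 = 2 by simpl; lra.
rewrite hsub INR_expn e2 /= in H.
set X := (2 ^ k) in H *.
have Xpos : (0 < X) by apply: pow_lt; lra.
set ns := INR (n_solvable n k m) in H *.
set nt := INR (n_total n k m) in H *.
rewrite /prob_solvable -/ns -/nt.
have ntpos : (0 <= nt) by apply: pos_INR.
have nspos : (0 <= ns) by apply: pos_INR.
have hp : (1 - / X = (X - 1) * / X) by field; lra.
rewrite hp Rpow_mult_distr pow_inv.
have Xm : (0 < X ^ m) by apply: pow_lt.
set Q := (2 ^ Nk n k * ((X - 1) ^ m * / X ^ m)).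
have hQ : (ns <= Q * nt).
  apply: (Rmult_le_reg_l (X ^ m)) => //.
  rewrite /Q; apply: (Rle_trans _ _ _ H); right; field; lra.
have Qpos : (0 <= Q).
  rewrite /Q; apply: Rmult_le_pos; first by apply: pow_le; lra.
  apply: Rmult_le_pos; last by left; apply: Rinv_0_lt_compat.
  apply: pow_le; have : (1 <= X) by apply: pow_R1_Rle; lra.
  lra.
case: (Req_dec nt 0) => hnt.
  by rewrite hnt /Rdiv Rinv_0 Rmult_0_r.
have ntp : 0 < nt by lra.
rewrite /Rdiv; apply: (Rle_trans _ (Q * nt * / nt)).
  apply: Rmult_le_compat_r => //; left; exact: Rinv_0_lt_compat.
right; rewrite /Q; field; lra.
Qed.

Lemma prob_ge0 (n k m : nat) : 0 <= prob_solvable n k m.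
Proof.
rewrite /prob_solvable /Rdiv; apply: Rmult_le_pos; first exact: pos_INR.
case: (n_total n k m) => [|t]; first by rewrite /= Rinv_0; right.
left; apply: Rinv_0_lt_compat; apply: lt_0_INR; by apply/ltP.
Qed.

Lemma main_aux (k : nat) (Delta : R) :
  leq 1 k ->
  Rlt (Delta_k k) Delta ->
  Un_cv (fun n : nat => prob_solvable n k (m_of Delta n k)) 0%R.
Proof.
move=> hk hD.
have X2 : 2 <= 2 ^ k.
  case: k hk {hD} => // k' _ /=; have := pow_R1_Rle 2 k'; lra.
set p := 1 - / 2 ^ k.
have hinv : 0 < / 2 ^ k <= / 2.
  split; first by apply: Rinv_0_lt_compat; lra.
  apply: Rinv_le_contravar; lra.
have p0 : 0 < p by rewrite /p; lra.
have p1 : p < 1 by rewrite /p; lra.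
have lnp : ln p < 0 by rewrite -ln_1; apply: ln_increasing.
have ln2 : 0 < ln 2 by have := ln_lt_2; lra.
have hDk : Delta_k k = - ln 2 / ln p.
  by rewrite /Delta_k /Rdiv Rmult_1_l ln_Rinv; [|lra].
rewrite hDk in hD.
have hc' : Delta * ln p < - ln 2.
  have h := Rmult_lt_gt_compat_neg_l (ln p) _ _ lnp hD.
  have e : ln p * (- ln 2 / ln p) = - ln 2 by field; lra.
  lra.
set c := ln 2 + Delta * ln p.
have c0 : c < 0 by rewrite /c; lra.
set q := exp c.
have q0 : 0 < q by apply: exp_pos.
have q1 : q < 1 by rewrite /q -exp_0; apply: exp_increasing.
have bound n : prob_solvable n k (m_of Delta n k) <= q ^ n.
  apply: (Rle_trans _ _ _ (prob_le n k (m_of Delta n k))).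
  rewrite -/p -(Rpower_pow _ 2) ?(Rpower_pow _ p) //; last lra.
  rewrite -(Rpower_pow _ p) // -(Rpower_pow _ q) // /Rpower /q ln_exp -exp_plus.
  apply: exp_le.
  have hm := m_of_ge Delta n k.
  have hn : INR n <= INR (Nk n k) by apply: le_INR; apply/leP; exact: Nk_ge.
  set a := INR (Nk n k) in hm hn *.
  set mm := INR (m_of Delta n k) in hm *.
  have h1 : mm * ln p <= Delta * a * ln p.
    nra.
  have h2 : a * c <= INR n * c.
    nra.
  rewrite /c in h2 *; lra.
move=> eps heps.
have [N HN] := pow_lt_1_zero q ltac:(rewrite Rabs_pos_eq; lra) eps heps.
exists N => n hn.
rewrite /Rdist Rminus_0_r Rabs_pos_eq; last exact: prob_ge0.
apply: (Rle_lt_trans _ _ _ (bound n)).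
have := HN n hn; rewrite Rabs_pos_eq //; apply: pow_le; lra.
Qed.
End RealPart.

Theorem mainTheorem7 (k : nat) (Delta : R) :
  (1 <= k)%N ->
  Rlt (Delta_k k) Delta ->
  Un_cv (fun n : nat => prob_solvable n k (m_of Delta n k)) 0%R.
Proof. exact: main_aux. Qed.
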